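(* Let $N\geq1$, let $\mathcal{H}_{X_1},\dots,\mathcal{H}_{X_N}$ be finite-dimensional Hilbert spaces and let $\rho=|V\rangle\langle V|$ be a pure state on $\mathcal{H}_{X_1}\otimes\cdots\otimes\mathcal{H}_{X_N}$. For each $i$, let $\lambda^i_1\geq\lambda^i_2\geq\cdots$ be the eigenvalues of $\rho_{X_i}$ in decreasing order and $|e^i_1\rangle,|e^i_2\rangle,\dots$ a corresponding orthonormal eigenbasis of $\mathcal{H}_{X_i}$. Write $|V\rangle=\sum_{x_1,\dots,x_N}V_{x_1\dots x_N}|e^1_{x_1}\rangle\otimes\cdots\otimes|e^N_{x_N}\rangle$, and set $\epsilon_i=1-\lambda^i_1$ and $\varepsilon=\sum_{i=1}^N\epsilon_i$. Then $$(1-\epsilon_1)\sum_{x_1>1}|V_{x_1 1\dots1}|^2\leq\epsilon_1(\varepsilon-\epsilon_1).$$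
   Context: $\rho_{X_i}$ denotes the partial trace of $\rho$ over all tensor factors except $\mathcal{H}_{X_i}$. The sum runs over $x_1=2,\dots,\dim\mathcal{H}_{X_1}$ with all other indices equal to $1$. *)

(* Defs.v *)
From HB Require Import structures.
From mathcomp Require Import all_boot all_order all_algebra.
Set Implicit Arguments. Unset Strict Implicit. Unset Printing Implicit Defensive.
Import Order.TTheory GRing.Theory Num.Theory.
Local Open Scope ring_scope.

(* The tensor factor i has dimension (d i).+1 (nonzero Hilbert spaces); basis
   index 1 of the paper is ord0.  Multi-indices of the N-fold tensor product: *)
Definition mindex (N : nat) (d : 'I_N -> nat) :=
  {dffun forall i : 'I_N, 'I_(d i).+1}.

(* A vector of H_{X_1} (x) ... (x) H_{X_N}, given by its coordinates in the
   standard product basis. *)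
Definition tvec (C : numClosedFieldType) (N : nat) (d : 'I_N -> nat) :=
  mindex d -> C.

(* Reduced density matrix rho_{X_i} = Tr_{all but X_i} |W><W|, in the standard
   basis of H_{X_i}: (rho_i)_{a b} = sum_z W_(a,z) conj(W_(b,z)). *)
Definition rho_red (C : numClosedFieldType) (N : nat) (d : 'I_N -> nat)
    (W : tvec C d) (i : 'I_N) : 'M[C]_((d i).+1) :=
  \matrix_(a, b)
    \sum_(y : mindex d | y i == a)
      \sum_(y' : mindex d | (y' i == b) && [forall j, (j != i) ==> (y' j == y j)])
        W y * (W y')^*.

Definition unitary_mx (C : numClosedFieldType) (n : nat) (U : 'M[C]_n) : Prop :=
  (map_mx Num.conj U^T) *m U = 1%:M.

Definition sorted_eigenbasis (C : numClosedFieldType) (n : nat)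
    (A U : 'M[C]_n.+1) (lam : 'I_n.+1 -> C) : Prop :=
  [/\ unitary_mx U,
      forall k : 'I_n.+1, A *m col k U = lam k *: col k U
    & forall k l : 'I_n.+1, (k <= l)%N -> lam l <= lam k].

(* Coefficients of W in the product basis e^1_{x_1} (x) ... (x) e^N_{x_N},
   where e^i_k is column k of U i:  V_x = <e_x | W>. *)
Definition coeffs (C : numClosedFieldType) (N : nat) (d : 'I_N -> nat)
    (U : forall i : 'I_N, 'M[C]_((d i).+1)) (W : tvec C d) (x : mindex d) : C :=
  \sum_(y : mindex d) (\prod_(i : 'I_N) (U i (y i) (x i))^*) * W y.

(* Main.v *)
Require Import Defs.
From HB Require Import structures.
From mathcomp Require Import all_boot all_order all_algebra.
From mathcomp Require Import ring.
Import Order.TTheory GRing.Theory Num.Theory.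
Local Open Scope ring_scope.

Section S.
Variables (C : numClosedFieldType) (N : nat) (d : 'I_N -> nat).
Local Notation M := (mindex d).

Definition upd (x : M) (i : 'I_N) (b : 'I_(d i).+1) : M :=
  finfun (fun j : 'I_N => if j == i then inord (val b) else x j).

Lemma upd_same x i b : upd x i b i = b.
Proof. by rewrite /upd ffunE eqxx inord_val. Qed.

Lemma upd_other x i b j : j != i -> upd x i b j = x j.
Proof. by rewrite /upd ffunE => /negbTE ->. Qed.

Lemma mindexP (x y : M) : (forall j, val (x j) = val (y j)) -> x = y.
Proof. by move=> h; apply/ffunP => j; apply/val_inj/h. Qed.

Lemma upd_id x i : upd x i (x i) = x.
Proof.
apply: mindexP => j; case: (eqVneq j i) => [->|ne]; first by rewrite upd_same.
by rewrite upd_other.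
Qed.

Lemma upd_upd x i a b : upd (upd x i a) i b = upd x i b.
Proof.
apply: mindexP => j; case: (eqVneq j i) => [->|ne]; first by rewrite !upd_same.
by rewrite !upd_other.
Qed.

Lemma rho_redE (W : tvec C d) i a b :
  rho_red W i a b = \sum_(y : M | y i == a) W y * (W (upd y i b))^*.
Proof.
rewrite /rho_red mxE; apply: eq_bigr => y /eqP ya.
rewrite (big_pred1 (upd y i b)) // => y'; apply/andP/eqP.
  case=> /eqP yb /forallP h; apply: mindexP => j.
  case: (eqVneq j i) => [->|ne]; first by rewrite upd_same yb.
  by rewrite upd_other // (eqP (implyP (h j) ne)).
move=> ->; rewrite upd_same eqxx; split=> //; apply/forallP => j.
by apply/implyP => ne; rewrite upd_other.
Qed.

Lemma dprod_distr (R : comNzRingType) (I : finType) (T : I -> finType)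
  (H : forall i, T i -> R) :
  \sum_(x : {dffun forall i, T i}) \prod_i H i (x i) = \prod_i \sum_(k : T i) H i k.
Proof.
rewrite (reindex (@dffun_of_fprod I T)); last exact/onW_bij/dffun_of_fprod_bij.
have E := @big_fprod_dep R 0 1 *%R +%R I T (fun i => [ffun k => H i k]) predT.
transitivity (\sum_(t : fprod T | predT (fprod_fun t)) \prod_(i : I) [ffun k => H i k] (t i)).
  by apply: eq_bigr => t _; apply: eq_bigr => i _; rewrite !ffunE.
rewrite E.
under [RHS]eq_bigr => i _ do rewrite -[\sum_(k : T i) H i k](eq_bigr _ (fun k _ => ffunE (H i) k)) (big_tag (fun i => [ffun k => H i k])).
rewrite bigA_distr_big_dep; apply: eq_bigl => g; by rewrite andbT.
Qed.

Lemma prod_nat_bool (I : finType) (P : pred I) (B : pred I) :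
  \prod_(j | P j) ((B j)%:R : C) = ([forall j, P j ==> B j])%:R.
Proof.
case: forallP => [h|/forallP]; first by rewrite big1 // => j /(implyP (h j)) ->.
rewrite negb_forall => /existsP[j]; rewrite negb_imply => /andP[Pj /negbTE Bj].
by rewrite (bigD1 j) //= Bj mul0r.
Qed.

Definition Ustar {n} (A : 'M[C]_n) := map_mx Num.conj A^T.

Lemma sum_by_coord i (F : 'I_(d i).+1 -> M -> C) :
  \sum_(k : 'I_(d i).+1) \sum_(y : M | y i == k) F k y = \sum_(y : M) F (y i) y.
Proof.
rewrite [RHS](partition_big (fun y : M => y i) predT) //.
by apply: eq_bigr => k _; apply: eq_bigr => y /eqP ->.
Qed.

Lemma match_upd (y y' : M) i l :
  ((y' i == l) && [forall j, (j != i) ==> (y' j == y j)]) = (y' == upd y i l).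
Proof.
apply/andP/eqP.
  case=> /eqP yb /forallP h; apply: mindexP => j.
  case: (eqVneq j i) => [->|ne]; first by rewrite upd_same yb.
  by rewrite upd_other // (eqP (implyP (h j) ne)).
move=> ->; rewrite upd_same eqxx; split=> //; apply/forallP => j.
by apply/implyP => ne; rewrite upd_other.
Qed.

Variable U : forall i : 'I_N, 'M[C]_((d i).+1).
Hypothesis hUU : forall i, U i *m Ustar (U i) = 1%:M.

Lemma keyS (y y' : M) i a b :
  \sum_(x : M | x i == a)
     (\prod_j (U j (y j) (x j))^*) * (\prod_j (U j (y' j) (upd x i b j))^*)^*
  = ([forall j, (j != i) ==> (y' j == y j)])%:R * ((U i (y i) a)^* * U i (y' i) b).
Proof.
set c := (U i (y i) a)^* * U i (y' i) b.
pose H := fun (j : 'I_N) (k : 'I_(d j).+1) =>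
  if j == i then (val k == val a)%:R * c else (U j (y j) k)^* * U j (y' j) k.
transitivity (\sum_(x : M) \prod_j H j (x j)).
  rewrite big_mkcond; apply: eq_bigr => x _.
  rewrite rmorph_prod -big_split /= (bigD1 i) //= [in RHS](bigD1 i) //= /H eqxx.
  case: (eqVneq (x i) a) => [xa|xa].
    rewrite xa eqxx mul1r upd_same conjCK; congr (_ * _).
    apply: eq_bigr => j ne; rewrite (negbTE ne) upd_other // conjCK //.
  have -> : (val (x i) == val a) = false by apply/negbTE; rewrite val_eqE.
  by rewrite mul0r mul0r.
rewrite dprod_distr (bigD1 i) //= /H eqxx.
rewrite (bigD1 a) //= eqxx mul1r big1 ?addr0; last first.
  by move=> k ne; rewrite val_eqE (negbTE ne) mul0r.
rewrite mulrC; congr (_ * _).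
rewrite -prod_nat_bool; apply: eq_bigr => j ne; rewrite (negbTE ne).
have := congr1 (fun A : 'M_((d j).+1) => A (y' j) (y j)) (hUU j).
by rewrite /= !mxE => <-; apply: eq_bigr => k _; rewrite !mxE mulrC.
Qed.

Lemma match_sum (y : M) i (G : M -> C) :
  \sum_(y' : M) ([forall j, (j != i) ==> (y' j == y j)])%:R * G y'
  = \sum_(l : 'I_(d i).+1) G (upd y i l).
Proof.
transitivity (\sum_(y' : M | [forall j, (j != i) ==> (y' j == y j)]) G y').
  rewrite [RHS]big_mkcond; apply: eq_bigr => y' _.
  by case: ifP => _; rewrite ?mul1r ?mul0r.
rewrite (partition_big (fun y' : M => y' i) predT) //.
apply: eq_bigr => l _; apply: big_pred1 => y' /=.
by rewrite andbC match_upd.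
Qed.

Lemma core (W : tvec C d) i a b :
  rho_red (coeffs U W) i a b = (Ustar (U i) *m rho_red W i *m U i) a b.
Proof.
transitivity (\sum_(y : M) \sum_(l : 'I_(d i).+1)
   W y * (W (upd y i l))^* * ((U i (y i) a)^* * U i l b)).
  rewrite rho_redE /coeffs.
  under eq_bigr => x _ do rewrite rmorph_sum mulr_suml.
  under eq_bigr => x _ do under eq_bigr => y _ do rewrite mulr_sumr.
  rewrite (exchange_big_dep predT) //=.
  apply: eq_bigr => y _.
  rewrite (exchange_big_dep predT) //=.
  transitivity (\sum_(y' : M) W y * (W y')^* *
     \sum_(x : M | x i == a)
     (\prod_j (U j (y j) (x j))^*) * (\prod_j (U j (y' j) (upd x i b j))^*)^*).
    apply: eq_bigr => y' _; rewrite mulr_sumr; apply: eq_big => [x|x _].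
      by rewrite !andbT.
    rewrite !rmorphM /=; ring.
  transitivity (\sum_(y' : M) ([forall j, (j != i) ==> (y' j == y j)])%:R *
     (W y * (W y')^* * ((U i (y i) a)^* * U i (y' i) b))).
    apply: eq_bigr => y' _; rewrite keyS; ring.
  rewrite match_sum; apply: eq_bigr => l _; rewrite upd_same //.
rewrite mxE exchange_big /=; apply: eq_bigr => l _.
rewrite mxE mulr_suml -(@sum_by_coord i (fun k y => W y * (W (upd y i l))^* * ((U i k a)^* * U i l b))).
apply: eq_bigr => k _; rewrite mxE [(U i)^T a k]mxE rho_redE mulr_sumr mulr_suml.
by apply: eq_bigr => y _; ring.
Qed.

Lemma tr_rr (X : tvec C d) i : \tr (rho_red X i) = \sum_(y : M) X y * (X y)^*.
Proof.
rewrite /mxtrace; under eq_bigr => a _ do rewrite rho_redE.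
rewrite (@sum_by_coord i (fun a y => X y * (X (upd y i a))^*)).
by apply: eq_bigr => y _; rewrite upd_id.
Qed.

Lemma tot_eq (W : tvec C d) (i : 'I_N) :
  \sum_(y : M) coeffs U W y * (coeffs U W y)^* = \sum_(y : M) W y * (W y)^*.
Proof.
rewrite -!(tr_rr _ i).
have -> : rho_red (coeffs U W) i = Ustar (U i) *m rho_red W i *m U i.
  by apply/matrixP => a b; rewrite core.
by rewrite mxtrace_mulC mulmxA hUU mul1mx.
Qed.
End S.
Arguments upd {N d}.
Arguments upd_same {N d}.
Arguments upd_other {N d} x i b {j}.
Arguments upd_id {N d}.
Arguments upd_upd {N d}.
Arguments mindexP {N d}.
Arguments Ustar {C n}.

Lemma diagE (C : numClosedFieldType) n (A U : 'M[C]_n.+1) lam :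
  sorted_eigenbasis A U lam -> forall a b,
  (Ustar U *m A *m U) a b = (a == b)%:R * lam b.
Proof.
case=> hu heig _ a b.
have AU : forall r k, (A *m U) r k = lam k * U r k.
  move=> r k; have := congr1 (fun B : 'cV_n.+1 => B r 0) (heig k).
  rewrite /= !mxE => e; rewrite -e; apply: eq_bigr => j _; rewrite !mxE //.
rewrite -mulmxA mxE.
transitivity ((\sum_r Ustar U a r * U r b) * lam b).
  by rewrite mulr_suml; apply: eq_bigr => r _; rewrite AU; ring.
have := congr1 (fun B : 'M_n.+1 => B a b) hu; rewrite /= !mxE => <-.
by congr (_ * _); apply: eq_bigr => r _; rewrite !mxE.
Qed.
Arguments core {C N d U}.
Arguments tot_eq {C N d U}.
Arguments rho_redE {C N d}.

Lemma CS (C : numClosedFieldType) (I : finType) (P : pred I) (f h : I -> C) :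
  `|\sum_(i | P i) f i * (h i)^*| ^+ 2 <=
  (\sum_(i | P i) `|f i| ^+ 2) * (\sum_(i | P i) `|h i| ^+ 2).
Proof.
set T := \sum_(i | P i) f i * (h i)^*.
set F := \sum_(i | P i) `|f i| ^+ 2.
set H := \sum_(i | P i) `|h i| ^+ 2.
have D : 0 <= \sum_(i | P i) \sum_(j | P j)
          (f i * h j - f j * h i) * (f i * h j - f j * h i)^*.
  by apply: sumr_ge0 => i _; apply: sumr_ge0 => j _; rewrite -normCK exprn_ge0.
have E : \sum_(i | P i) \sum_(j | P j)
          (f i * h j - f j * h i) * (f i * h j - f j * h i)^*
        = (F * H - `|T| ^+ 2) *+ 2.
  have E1 : forall i j, (f i * h j - f j * h i) * (f i * h j - f j * h i)^* =
     `|f i| ^+ 2 * `|h j| ^+ 2 + `|f j| ^+ 2 * `|h i| ^+ 2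
     - (f i * (h i)^*) * (f j * (h j)^*)^* - (f j * (h j)^*) * (f i * (h i)^*)^*.
    by move=> i j; rewrite !normCK !rmorphB !rmorphM /= !conjCK; ring.
  under eq_bigr => i _ do under eq_bigr => j _ do rewrite E1.
  under eq_bigr => i _ do rewrite !sumrB big_split /=.
  rewrite !sumrB big_split /=.
  have FH : \sum_(i | P i) \sum_(j | P j) `|f i| ^+ 2 * `|h j| ^+ 2 = F * H.
    by rewrite mulr_suml; apply: eq_bigr => i _; rewrite mulr_sumr.
  have HF : \sum_(i | P i) \sum_(j | P j) `|f j| ^+ 2 * `|h i| ^+ 2 = F * H.
    by rewrite exchange_big.
  have TT : \sum_(i | P i) \sum_(j | P j) (f i * (h i)^*) * (f j * (h j)^*)^* = `|T| ^+ 2.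
    by rewrite normCK rmorph_sum mulr_suml; apply: eq_bigr => i _; rewrite mulr_sumr.
  have TT' : \sum_(i | P i) \sum_(j | P j) (f j * (h j)^*) * (f i * (h i)^*)^* = `|T| ^+ 2.
    by rewrite exchange_big.
  rewrite FH HF TT TT'; ring.
by move: D; rewrite E pmulrn_lge0 // subr_ge0.
Qed.

Section F.
Variables (C : numClosedFieldType) (N : nat) (d : 'I_N -> nat).
Local Notation M := (mindex d).

Lemma final (V : M -> C) (i : 'I_N) (lam0 : C) (epsv : 'I_N -> C)
  (tot : \sum_(y : M) `|V y| ^+ 2 = 1)
  (off : forall a : 'I_(d i).+1, a != ord0 ->
          \sum_(y : M | y i == a) V y * (V (upd y i ord0))^* = 0)
  (E0 : forall j, epsv j = \sum_(y : M | y j != ord0) `|V y| ^+ 2)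
  (L0 : lam0 = \sum_(y : M | y i == ord0) `|V y| ^+ 2) :
  lam0 * (\sum_(x : M | (x i != ord0) && [forall j, (j != i) ==> (x j == ord0)])
        `|V x| ^+ 2)
  <= epsv i * (\sum_j epsv j - epsv i).
Proof.
set g := fun y => `|V y| ^+ 2.
have g0 : forall y, 0 <= g y by move=> y; rewrite /g exprn_ge0.
set X1 := fun x : M => (x i != ord0) && [forall j, (j != i) ==> (x j == ord0)].
pose x0 : M := finfun (fun j => ord0).
have x0E : forall j, x0 j = ord0 by move=> j; rewrite /x0 ffunE.
set B := \sum_(y : M | (y i == ord0) && (y != x0)) g y.
set p := g x0.
have B0 : 0 <= B by apply: sumr_ge0.
have lam0E : lam0 = p + B by rewrite L0 (bigD1 x0) //= x0E.
pose A := fun x : M => \sum_(y : M | (y i == x i) && (y != x)) g y.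
have X1uniq : forall x1 x2, X1 x1 -> X1 x2 -> x1 i = x2 i -> x1 = x2.
  move=> x1 x2 /andP[_ /forallP h1] /andP[_ /forallP h2] e; apply: mindexP => j.
  case: (eqVneq j i) => [->|ne]; first by rewrite e.
  by rewrite (eqP (implyP (h1 j) ne)) (eqP (implyP (h2 j) ne)).
have CSx : forall x, X1 x -> g x * p <= A x * B.
  move=> x X1x; have /andP[xi0 /forallP hx] := X1x.
  have ux : upd x i ord0 = x0.
    apply: mindexP => j; case: (eqVneq j i) => [->|ne].
      by rewrite upd_same x0E.
    by rewrite upd_other // x0E (eqP (implyP (hx j) ne)).
  have := off (x i) xi0; rewrite (bigD1 x) //= ux => /eqP; rewrite addr_eq0 => /eqP e.
  have -> : g x * p = `|V x * (V x0)^*| ^+ 2.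
    by rewrite /g /p normrM norm_conjC exprMn.
  rewrite e normrN.
  apply: le_trans; first exact: CS.
  have -> : B = \sum_(y : M | (y i == x i) && (y != x)) `|V (upd y i ord0)| ^+ 2.
    rewrite /B (reindex_onto (fun y : M => upd y i ord0) (fun z : M => upd z i (x i))) /=; last first.
      move=> z /andP[/eqP zi _]; rewrite upd_upd -zi upd_id //.
    apply: eq_bigl => y; rewrite upd_same eqxx /=.
    case: (eqVneq (y i) (x i)) => [yi|yi] /=.
      rewrite -yi upd_upd upd_id eqxx andbT; congr negb.
      apply/eqP/eqP => [e2|->//]; apply: mindexP => j.
      case: (eqVneq j i) => [->|ne]; first by rewrite yi.
      by rewrite -(upd_other y i ord0 ne) e2 x0E (eqP (implyP (hx j) ne)).
    rewrite upd_upd; apply/negbTE; rewrite negb_and; apply/orP; right.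
    by apply/negP => /eqP e2; move: yi; rewrite -e2 upd_same eqxx.
  by rewrite /A /g lexx.
have Q1 : \sum_(x | X1 x) (g x + A x) <= epsv i.
  have gA : forall x : M, g x + A x = \sum_(y : M | y i == x i) g y.
    by move=> x; rewrite [RHS](bigD1 x) //.
  under eq_bigr => x _ do rewrite gA.
  rewrite E0 (exchange_big_dep predT) //= [X in _ <= X]big_mkcond /=.
  apply: ler_sum => y _.
  case: (pickP (fun x : M => X1 x && (y i == x i))) => [x' /andP[X1x' yx'] | none].
    rewrite (bigD1 x') /=; last by rewrite X1x' yx'.
    rewrite big1 ?addr0; last first.
      move=> x'' /andP[/andP[X1x'' yx''] ne]; exfalso; move/negP: ne; apply.
      by apply/eqP/X1uniq => //; rewrite -(eqP yx'') -(eqP yx').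
    have /andP[xi0 _] := X1x'.
    by rewrite -(eqP yx') in xi0; rewrite xi0.
  by rewrite big_pred0 //; case: ifP => _ //; apply: g0.
have Q2 : B <= \sum_j epsv j - epsv i.
  have -> : \sum_j epsv j - epsv i = \sum_(j | j != i) epsv j.
    by rewrite (bigD1 i) //=; ring.
  under eq_bigr => j _ do rewrite E0.
  have H1 : B <= \sum_(y : M | (y i == ord0) && (y != x0))
     \sum_(j | j != i) (if y j != ord0 then g y else 0).
    apply: ler_sum => y /andP[yi ynx0].
    case: (pickP (fun j : 'I_N => y j != ord0)) => [j hj|none]; last first.
      exfalso; move/negP: ynx0; apply; apply/eqP; apply: mindexP => j.
      by have := none j; rewrite /= x0E => /negbFE/eqP ->.
    have ji : j != i by apply/eqP => ji; rewrite ji yi in hj.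
    rewrite (bigD1 j) //= hj lerDl; apply: sumr_ge0 => k _; case: ifP => _ //; apply: g0.
  have H2 : \sum_(y : M | (y i == ord0) && (y != x0))
     \sum_(j | j != i) (if y j != ord0 then g y else 0) <=
     \sum_(y : M) \sum_(j | j != i) (if y j != ord0 then g y else 0).
    rewrite [X in _ <= X](bigID (fun y : M => (y i == ord0) && (y != x0))) /= lerDl.
    by apply: sumr_ge0 => y _; apply: sumr_ge0 => k _; case: ifP => _ //; apply: g0.
  apply: le_trans H1 (le_trans H2 _).
  rewrite exchange_big /=; apply: ler_sum => j _; rewrite [X in _ <= X]big_mkcond lexx //.
have ei0 : 0 <= epsv i.
  by rewrite E0; apply: sumr_ge0 => y _; apply: g0.
rewrite lam0E mulr_sumr.
have H1 : \sum_(x : M | X1 x) (p + B) * g x <= \sum_(x : M | X1 x) (A x * B + B * g x).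
  apply: ler_sum => x X1x; rewrite mulrDl; apply: lerD; last by rewrite mulrC.
  by rewrite mulrC; apply: CSx.
have H2 : \sum_(x : M | X1 x) (A x * B + B * g x) <= B * epsv i.
  rewrite (_ : \sum_(x : M | X1 x) (A x * B + B * g x) = B * \sum_(x : M | X1 x) (g x + A x)).
    by apply: ler_wpM2l.
  by rewrite mulr_sumr; apply: eq_bigr => x _; ring.
have H3 : B * epsv i <= epsv i * (\sum_j epsv j - epsv i).
  by rewrite mulrC; apply: ler_wpM2l.
exact: le_trans H1 (le_trans H2 H3).
Qed.
End F.
Arguments final {C N d V i lam0 epsv}.

Theorem lemma3 (C : numClosedFieldType) (N : nat) (hN : (0 < N)%N)
    (d : 'I_N -> nat) (W : tvec C d)
    (hW : \sum_(y : mindex d) `|W y| ^+ 2 = 1)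
    (U : forall i : 'I_N, 'M[C]_((d i).+1))
    (lam : forall i : 'I_N, 'I_(d i).+1 -> C)
    (hU : forall i : 'I_N, sorted_eigenbasis (rho_red W i) (U i) (lam i)) :
  let i1 : 'I_N := Ordinal hN in
  let eps := fun i : 'I_N => 1 - lam i ord0 in
  let veps := \sum_(i : 'I_N) eps i in
  (1 - eps i1) *
    (\sum_(x : mindex d | (x i1 != ord0) && [forall j, (j != i1) ==> (x j == ord0)])
        `|coeffs U W x| ^+ 2)
  <= eps i1 * (veps - eps i1).
Proof.
cbv zeta.
pose i1 : 'I_N := Ordinal hN.
pose eps := fun i : 'I_N => 1 - lam i ord0.
change (Ordinal hN) with i1.
have hUU : forall i, U i *m Ustar (U i) = 1%:M.
  by move=> i; apply: mulmx1C; case: (hU i).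
set V := coeffs U W.
have E1 : forall i a b, \sum_(y : mindex d | y i == a) V y * (V (upd y i b))^*
                        = (a == b)%:R * lam i b.
  by move=> i a b; rewrite -rho_redE (core hUU); apply: diagE.
have tot : \sum_(y : mindex d) `|V y| ^+ 2 = 1.
  rewrite -hW; under eq_bigr do rewrite normCK.
  rewrite (tot_eq hUU W i1); apply: eq_bigr => y _; by rewrite normCK.
have gE : forall i a, \sum_(y : mindex d | y i == a) `|V y| ^+ 2 = lam i a.
  move=> i a; have := E1 i a a; rewrite eqxx mul1r => <-; apply: eq_bigr => y /eqP <-.
  by rewrite upd_id normCK.
have E0 : forall j, eps j = \sum_(y : mindex d | y j != ord0) `|V y| ^+ 2.
  move=> j; rewrite /eps -gE -tot (bigID (fun y : mindex d => y j == ord0)) /=; ring.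
have off : forall a : 'I_(d i1).+1, a != ord0 ->
    \sum_(y : mindex d | y i1 == a) V y * (V (upd y i1 ord0))^* = 0.
  by move=> a /negbTE ha; rewrite E1 ha mul0r.
have -> : 1 - (1 - lam i1 ord0) = lam i1 ord0 by ring.
exact: (final (epsv := eps) tot off E0 (esym (gE i1 ord0))).
Qed.
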